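(* For every integer $n\ge1$, $\zeta(-n,-n-1|1)=\zeta(-n-1,-n|1)$.
   Context: Normalized multiple Bernoulli polynomials: for integers $k\ge0$, $\zeta(-k|z)=-\frac{B_{k+1}(z)}{k+1}$ ($B_n(z)$ the Bernoulli polynomials, $B_n=B_n(0)$), and for $k_1,k_2\ge0$, $\zeta(-k_1,-k_2|z)=-\frac{1}{k_2+1}\zeta(-k_1-k_2-1|z)-\frac12\zeta(-k_1-k_2|z)+\sum_{q=1}^{k_2}(-k_2)_q\frac{B_{q+1}}{(q+1)!}\zeta(-k_1-k_2+q|z)$, with $(a)_q=a(a+1)\cdots(a+q-1)$. *)

(* Defs.v *)
From mathcomp Require Import all_boot all_order all_algebra.
Set Implicit Arguments. Unset Strict Implicit. Unset Printing Implicit Defensive.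
Import Order.TTheory GRing.Theory Num.Theory.
Local Open Scope ring_scope.

(* bern_seq n = [:: B_0; ...; B_n], Bernoulli numbers with B_1 = -1/2,
   from the recurrence  sum_{k=0}^{m} C(m+1,k) B_k = 0  (m >= 1), B_0 = 1. *)
Fixpoint bern_seq (n : nat) : seq rat :=
  match n with
  | 0 => [:: 1]
  | m.+1 => let s := bern_seq m in
            rcons s (- ((m.+2)%:R)^-1 * \sum_(k < m.+1) ('C(m.+2, k))%:R * s`_k)
  end.

Definition bernoulli (n : nat) : rat := (bern_seq n)`_n.

Definition bernoulli_poly (n : nat) (z : rat) : rat :=
  \sum_(k < n.+1) ('C(n, k))%:R * bernoulli k * z ^+ (n - k).

Definition pochhammer (a : rat) (q : nat) : rat :=
  \prod_(i < q) (a + i%:R).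

(* zeta(-k | z) = - B_{k+1}(z) / (k+1). *)
Definition zeta1 (k : nat) (z : rat) : rat :=
  - bernoulli_poly k.+1 z / (k.+1)%:R.

Definition zeta2 (k1 k2 : nat) (z : rat) : rat :=
  - ((k2.+1)%:R)^-1 * zeta1 (k1 + k2).+1 z
  - 2^-1 * zeta1 (k1 + k2) z
  + \sum_(1 <= q < k2.+1)
      pochhammer (- (k2%:R)) q * bernoulli q.+1 / (q.+1)`!%:R
        * zeta1 (k1 + k2 - q)%N z.

(* Main.v *)
Require Import Defs.
From mathcomp Require Import all_boot all_order all_algebra ring lra zify.
Set Implicit Arguments. Unset Strict Implicit. Unset Printing Implicit Defensive.
Import Order.TTheory GRing.Theory Num.Theory.
Local Open Scope ring_scope.

Lemma size_bern n : size (bern_seq n) = n.+1.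
Proof. by elim: n => [|n IH] //=; rewrite size_rcons IH. Qed.

Lemma bern_nth n k : (k <= n)%N -> (bern_seq n)`_k = bernoulli k.
Proof.
elim: n k => [|n IH] k hk; first by case: k hk.
rewrite leq_eqVlt in hk; case/orP: hk => [/eqP -> //|hk].
by rewrite /= nth_rcons size_bern hk IH.
Qed.

Lemma bern_rec m : \sum_(k < m.+2) ('C(m.+2,k))%:R * bernoulli k = 0.
Proof.
rewrite big_ord_recr /=.
have -> : bernoulli m.+1 = - ((m.+2)%:R)^-1 * \sum_(k < m.+1) ('C(m.+2, k))%:R * bernoulli k.
  rewrite /bernoulli /= nth_rcons size_bern ltnn eqxx.
  congr (_ * _); apply: eq_bigr => i _; by rewrite bern_nth // -ltnS.
rewrite binSn.
set S := \sum_(_ < _) _.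
have h : (m.+2)%:R != 0 :> rat by rewrite pnatr_eq0.
field. by rewrite -(natrD _ 2 m) pnatr_eq0.
Qed.
Lemma factr_neq0 n : (n`!)%:R != 0 :> rat.
Proof. by rewrite pnatr_eq0 -lt0n fact_gt0. Qed.

Lemma binr n k : (k <= n)%N ->
  ('C(n, k))%:R = (n`!)%:R / ((k`!)%:R * ((n - k)`!)%:R) :> rat.
Proof.
move=> hk; rewrite -(bin_fact hk) !natrM.
have h1 := factr_neq0 k; have h2 := factr_neq0 (n - k).
by field; rewrite h1 h2.
Qed.

Lemma alt_sum i : \sum_(j < i.+1) ('C(i.+1, j.+1))%:R * (-1) ^+ j = 1 :> rat.
Proof.
have := exprDn (1 : rat) (-1) i.+1.
rewrite subrr expr0n /= big_ord_recl /=.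
have E : forall j : 'I_i.+1, (1:rat) ^+ (i.+1 - bump 0 j) * (-1) ^+ bump 0 j *+ 'C(i.+1, bump 0 j) = - ('C(i.+1, j.+1)%:R * (-1) ^+ j).
  move=> j; rewrite expr1n mul1r /bump /= add1n exprS -mulr_natl; ring.
rewrite (eq_bigr _ (fun j _ => E j)) sumrN expr1n expr0 mul1r bin0 mulr1n.
move=> h; lra.
Qed.

Lemma bern0 : bernoulli 0 = 1. Proof. by []. Qed.

Lemma sumB i : \sum_(j < i.+1) bernoulli j / (j`!)%:R * (((i - j).+1)`!)%:R^-1
  = if i == 0%N then 1 else 0.
Proof.
case: i => [|m].
  by rewrite big_ord1 bern0 subnn fact0 !divr1.
rewrite /=; transitivity (((m.+2)`!%:R)^-1 * \sum_(j < m.+2) ('C(m.+2,j))%:R * bernoulli j); last by rewrite bern_rec mulr0.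
rewrite big_distrr /=.
apply: eq_bigr => j _.
have hj : (j <= m.+1)%N by rewrite -ltnS.
rewrite binr ?(leq_trans hj) // -subSn //.
have h1 := factr_neq0 j; have h2 := factr_neq0 (m.+2 - j).
have h3 := factr_neq0 m.+2.
rewrite /= in h3 *. 
set a := (m.+2 - j)`!%:R; set b := (j`!)%:R; set c := (m.+2)`!%:R.
field. by rewrite h1 h2 h3.
Qed.

Lemma sumE i : \sum_(j < i.+1) (-1) ^+ j / ((j.+1)`!)%:R * (((i - j)`!)%:R)^-1
  = (((i.+1)`!)%:R)^-1 :> rat.
Proof.
transitivity (((i.+1)`!%:R : rat)^-1 * \sum_(j < i.+1) ('C(i.+1,j.+1))%:R * (-1) ^+ j); last by rewrite alt_sum mulr1.
rewrite big_distrr /=; apply: eq_bigr => j _.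
have hj : (j.+1 <= i.+1)%N by [].
rewrite binr // subSS.
have h1 := factr_neq0 j.+1; have h2 := factr_neq0 (i - j).
have h3 := factr_neq0 i.+1.
set a := ((i - j)`!)%:R; set b := (j.+1`!)%:R; set c := (i.+1)`!%:R.
field. by rewrite h1 h2 h3.
Qed.

Lemma sumX i : (2 <= i)%N ->
  \sum_(j < i.+1) bernoulli j / (j`!)%:R * (((i - j)`!)%:R)^-1
  = bernoulli i / (i`!)%:R.
Proof.
case: i => [|[|m]] // _.
transitivity (((m.+2)`!%:R)^-1 * \sum_(j < m.+3) ('C(m.+2,j))%:R * bernoulli j).
  rewrite big_distrr /=; apply: eq_bigr => j _.
  have hj : (j <= m.+2)%N by rewrite -ltnS.
  rewrite binr //.
  have h1 := factr_neq0 j; have h2 := factr_neq0 (m.+2 - j).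
  have h3 := factr_neq0 m.+2.
  set a := ((m.+2 - j)`!)%:R; set b := (j`!)%:R; set c := (m.+2)`!%:R.
  field. by rewrite h1 h2 h3.
by rewrite big_ord_recr /= bern_rec binn add0r mul1r mulrC.
Qed.

Definition eqm (M : nat) (p q : {poly rat}) := forall i, (i < M)%N -> p`_i = q`_i.

Lemma eqm_mul M p p' q q' : eqm M p p' -> eqm M q q' -> eqm M (p * q) (p' * q').
Proof.
move=> hp hq i hi; rewrite !coefM; apply: eq_bigr => j _.
have hj : (j < i.+1)%N := ltn_ord j.
by rewrite hp ?hq //; lia.
Qed.

Lemma eqm_trans M p q r : eqm M p q -> eqm M q r -> eqm M p r.
Proof. by move=> h1 h2 i hi; rewrite h1 ?h2. Qed.
Lemma eqm_sym M p q : eqm M p q -> eqm M q p.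
Proof. by move=> h i hi; rewrite h. Qed.
Lemma eqm_refl M p : eqm M p p.
Proof. by []. Qed.

Lemma coef_conv M (a b : nat -> rat) i : (i < M)%N ->
  (\poly_(k < M) a k * \poly_(k < M) b k)`_i = \sum_(j < i.+1) a j * b (i - j)%N.
Proof.
move=> hi; rewrite coefM; apply: eq_bigr => j _.
have hj : (j < i.+1)%N := ltn_ord j.
by rewrite !coef_poly ifT ?ifT //; lia.
Qed.

Section P.
Variable M : nat.
Definition Bp := \poly_(k < M) (bernoulli k / (k`!)%:R).
Definition Ep := \poly_(k < M) (((k.+1)`!)%:R^-1 : rat).
Definition Xp := \poly_(k < M) (((k`!)%:R)^-1 : rat).
Definition Bn := \poly_(k < M) ((-1) ^+ k * bernoulli k / (k`!)%:R).
Definition En := \poly_(k < M) ((-1) ^+ k / ((k.+1)`!)%:R : rat).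

Lemma F1 : eqm M (Bp * Ep) 1.
Proof.
move=> i hi; rewrite coef_conv // coefC sumB; by case: i hi.
Qed.

Lemma F1n : eqm M (Bn * En) 1.
Proof.
move=> i hi; rewrite coef_conv // coefC.
transitivity ((-1) ^+ i * \sum_(j < i.+1) bernoulli j / (j`!)%:R * (((i - j).+1)`!)%:R^-1).
  rewrite big_distrr /=; apply: eq_bigr => j _.
  have hj : (j <= i)%N by rewrite -ltnS.
  rewrite (_ : (-1) ^+ i = (-1) ^+ j * (-1) ^+ (i - j) :> rat); last by rewrite -exprD subnKC.
  ring.
by rewrite sumB; case: i hi => [|i] _; rewrite ?expr0 ?mul1r ?mulr0.
Qed.

Lemma F2 : eqm M (En * Xp) Ep.
Proof.
move=> i hi; rewrite coef_conv // coef_poly hi -sumE.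
by apply: eq_bigr => j _.
Qed.

Lemma F3 i : (2 <= i)%N -> (i < M)%N -> (Bp * Xp)`_i = bernoulli i / (i`!)%:R.
Proof.
move=> h2 hi; rewrite coef_conv // -sumX //.
Qed.

Lemma key : eqm M Bn (Bp * Xp).
Proof.
apply: (@eqm_trans _ _ (Bn * (Bp * Ep))).
  apply: (@eqm_trans _ _ (Bn * 1)); first by rewrite mulr1.
  by apply: eqm_mul => //; apply: eqm_sym; apply: F1.
apply: (@eqm_trans _ _ (Bn * ((En * Xp) * Bp))).
  apply: eqm_mul => //; rewrite mulrC; apply: eqm_mul => //.
  by apply: eqm_sym; apply: F2.
rewrite !mulrA -mulrA.
apply: (@eqm_trans _ _ (1 * (Xp * Bp))).
  by apply: eqm_mul => //; apply: F1n.
by rewrite mul1r mulrC.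
Qed.
End P.

Lemma bern_odd k : bernoulli k.*2.+3 = 0.
Proof.
have := @key (k.*2.+4) k.*2.+3 (ltnSn _).
rewrite F3 // coef_poly ltnSn.
rewrite (_ : (-1) ^+ k.*2.+3 = -1 :> rat); last first.
  by rewrite !exprS -mul2n exprM sqrrN !expr1n; ring.
have h := factr_neq0 k.*2.+3.
set b := bernoulli _; set f := _%:R.
move=> /(congr1 (fun x => x * f)); rewrite !divfK // => e; lra.
Qed.

Lemma bpoly1 j : (2 <= j)%N -> bernoulli_poly j 1 = bernoulli j.
Proof.
case: j => [|[|m]] // _; rewrite /bernoulli_poly.
under eq_bigr => i _ do rewrite expr1n mulr1.
by rewrite big_ord_recr /= bern_rec binn add0r mul1r.
Qed.

Lemma zeta1_one k : (1 <= k)%N -> zeta1 k 1 = - bernoulli k.+1 / (k.+1)%:R.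
Proof. by move=> hk; rewrite /zeta1 bpoly1. Qed.

Lemma zeta2_gen k1 k2 n : (k1 + k2 = n.*2.+1)%N -> (k2 <= n.+1)%N -> (1 <= n)%N ->
  zeta2 k1 k2 1 = - 2^-1 * zeta1 n.*2.+1 1.
Proof.
move=> hs hk hn; rewrite /zeta2 hs.
rewrite (zeta1_one (k := n.*2.+2)) // (bern_odd n).
rewrite [X in _ + X](_ : _ = 0); first by ring.
rewrite big_nat_cond big1 //.
move=> q /andP[/andP[h1 h2] _].
have := odd_double_half q; case: (odd q) => /= hq.
  rewrite zeta1_one; last by lia.
  rewrite (_ : (n.*2.+1 - q).+1 = (n - q./2 - 1).*2.+3)%N; last by lia.
  by rewrite bern_odd !(mul0r, oppr0, mulr0).
rewrite (_ : q.+1 = (q./2 - 1).*2.+3)%N; last by lia.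
by rewrite bern_odd !(mul0r, oppr0, mulr0).
Qed.

Theorem propositionB (n : nat) (hn : (1 <= n)%N) :
  zeta2 n n.+1 1 = zeta2 n.+1 n 1.
Proof.
rewrite (@zeta2_gen _ _ n) ?(@zeta2_gen _ _ n) //; lia.
Qed.
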